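(* Let $n\ge 2$ and let $P\in\mathrm{Mat}(n^2,\mathbb{C})$ be an orthogonal projection (i.e. $P^*=P$, $P^2=P$) of rank $r$. Put $P_1=P\otimes I_n$ and $P_2=I_n\otimes P$ in $\mathrm{Mat}(n^3,\mathbb{C})$. Then (a) $\operatorname{tr}_3(P_1P_2)\le rn$, and equality holds if and only if $P=0$ or $P=I_n\otimes I_n$; (b) $\operatorname{tr}_3\big((P_1P_2)^2\big)\le \operatorname{tr}_3(P_1P_2)$, and equality holds if and only if $P_1P_2=P_2P_1$.
   Context: $I_n$ is the $n\times n$ identity matrix, $\otimes$ is the Kronecker product, $P^*$ is the conjugate transpose, and $\operatorname{tr}_3$ denotes the ordinary matrix trace on $\mathrm{Mat}(n^3,\mathbb{C})$. *)

(* Defs.v *)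
From mathcomp Require Import all_boot all_order all_algebra.
From mathcomp Require Import algC.
From mathcomp Require Import mxtens.
Set Implicit Arguments. Unset Strict Implicit. Unset Printing Implicit Defensive.
Import Order.TTheory GRing.Theory Num.Theory.
Local Open Scope ring_scope.

(* Kronecker product: tensmx (A *t B) from mathcomp-real-closed's mxtens,
   with the standard lexicographic index convention (i1, i2) |-> i1 * m2 + i2. *)

Definition adjmx (m n : nat) (A : 'M[algC]_(m, n)) : 'M[algC]_(n, m) :=
  map_mx Num.conj A^T.

Definition orth_proj (N : nat) (P : 'M[algC]_N) : Prop :=
  adjmx P = P /\ P *m P = P.

Definition P1 (n : nat) (P : 'M[algC]_(n * n)) : 'M[algC]_(n * n * n) :=
  P *t (1%:M : 'M[algC]_n).

(* P2 = I_n (x) P  in Mat(n^3); the index set n*(n*n) is identified with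
   (n*n)*n (associativity of the Kronecker index convention). *)
Definition P2 (n : nat) (P : 'M[algC]_(n * n)) : 'M[algC]_(n * n * n) :=
  castmx (mulnA n n n, mulnA n n n) ((1%:M : 'M[algC]_n) *t P).

(* Main.v *)
Require Import Defs.
From mathcomp Require Import all_boot all_order all_algebra.
From mathcomp Require Import algC.
From mathcomp Require Import mxtens.
From mathcomp Require Import ring.
Import Order.TTheory GRing.Theory Num.Theory.
Local Open Scope ring_scope.
Set Implicit Arguments. Unset Strict Implicit. Unset Printing Implicit Defensive.

Lemma adjmx_mul m n p (A : 'M[algC]_(m, n)) (B : 'M[algC]_(n, p)) :
  adjmx (A *m B) = adjmx B *m adjmx A.
Proof. by rewrite /adjmx trmx_mul map_mxM. Qed.

Lemma adjmxK m n (A : 'M[algC]_(m, n)) : adjmx (adjmx A) = A.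
Proof. by apply/matrixP => i j; rewrite !mxE conjCK. Qed.

Lemma adjmxB m n (A B : 'M[algC]_(m, n)) : adjmx (A - B) = adjmx A - adjmx B.
Proof. by apply/matrixP => i j; rewrite !mxE rmorphB. Qed.

Lemma adjmx1 m : adjmx (1%:M : 'M[algC]_m) = 1%:M.
Proof. by apply/matrixP => i j; rewrite !mxE rmorph_nat eq_sym. Qed.

Lemma adjmx_tens m n p q (A : 'M[algC]_(m, n)) (B : 'M[algC]_(p, q)) :
  adjmx (A *t B) = adjmx A *t adjmx B.
Proof. by apply/matrixP => i j; rewrite !mxE rmorphM. Qed.

Lemma adjmx_cast m n m' n' (e1 : m = m') (e2 : n = n') (A : 'M[algC]_(m, n)) :
  adjmx (castmx (e1, e2) A) = castmx (e2, e1) (adjmx A).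
Proof. by apply/matrixP => i j; rewrite !mxE !castmxE !mxE. Qed.

Lemma frobE m n (A : 'M[algC]_(m, n)) :
  \tr (A *m adjmx A) = \sum_i \sum_j `|A i j| ^+ 2.
Proof.
rewrite /mxtrace; apply: eq_bigr => i _; rewrite mxE; apply: eq_bigr => j _.
by rewrite !mxE normCK.
Qed.

Lemma frob_ge0 m n (A : 'M[algC]_(m, n)) : 0 <= \tr (A *m adjmx A).
Proof. by rewrite frobE; apply: sumr_ge0 => i _; apply: sumr_ge0 => j _; apply: exprn_ge0. Qed.

Lemma frob_eq0 m n (A : 'M[algC]_(m, n)) : \tr (A *m adjmx A) = 0 -> A = 0.
Proof.
rewrite frobE => /psumr_eq0P H; apply/matrixP => i j; rewrite mxE.
have {}H := H (fun i _ => sumr_ge0 _ (fun j _ => exprn_ge0 2 (normr_ge0 _))) i isT.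
have /psumr_eq0P H2 := H.
have := H2 (fun j _ => exprn_ge0 2 (normr_ge0 _)) j isT.
by move/eqP; rewrite expf_eq0 normr_eq0 /= => /eqP.
Qed.

Lemma tr_idem (F : fieldType) m (P : 'M[F]_m) : P *m P = P -> \tr P = (\rank P)%:R.
Proof.
move=> PP.
have mb := mulmx_base P.
move: (row_base_free P) (col_base_full P) mb.
move: (row_base P) (col_base P) => R C fR fC mb.
have E : R *m C = 1%:M.
  apply: (row_free_inj fR); rewrite mul1mx.
  apply: (row_full_inj fC).
  by rewrite !mulmxA mb -mulmxA mb PP.
by rewrite -{1}mb mxtrace_mulC E mxtrace1.
Qed.
Section Two.
Variables (N : nat) (Q1 Q2 : 'M[algC]_N).
Hypotheses (h1 : adjmx Q1 = Q1) (i1 : Q1 *m Q1 = Q1)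
           (h2 : adjmx Q2 = Q2) (i2 : Q2 *m Q2 = Q2).

Lemma idemC (Q : 'M[algC]_N) : Q *m Q = Q -> (1%:M - Q) *m (1%:M - Q) = 1%:M - Q.
Proof. by move=> iQ; rewrite mulmxBl !mulmxBr !mul1mx mulmx1 iQ subrr subr0. Qed.

Lemma L1 : \tr Q1 - \tr (Q1 *m Q2) =
  \tr ((Q1 *m (1%:M - Q2)) *m adjmx (Q1 *m (1%:M - Q2))).
Proof.
rewrite adjmx_mul adjmxB adjmx1 h1 h2 mulmxA -(mulmxA Q1) idemC //.
rewrite mulmxBr mulmx1 mulmxBl i1 raddfB /=.
by rewrite [\tr (Q1 *m Q2 *m Q1)]mxtrace_mulC mulmxA i1.
Qed.

Lemma L2 : \tr (Q1 *m Q2) - \tr ((Q1 *m Q2) *m (Q1 *m Q2)) =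
  \tr ((Q1 *m Q2 *m (1%:M - Q1)) *m adjmx (Q1 *m Q2 *m (1%:M - Q1))).
Proof.
rewrite !adjmx_mul adjmxB adjmx1 h1 h2.
rewrite !mulmxA -[in X in _ = X](mulmxA (Q1 *m Q2)) idemC // mulmxBr mulmx1 !mulmxBl.
rewrite -(mulmxA Q1 Q2 Q2) i2 raddfB /=.
rewrite [\tr (Q1 *m Q2 *m Q1)]mxtrace_mulC mulmxA i1.
rewrite [\tr (Q1 *m Q2 *m Q1 *m Q2 *m Q1)]mxtrace_mulC.
by rewrite !mulmxA i1.
Qed.

Lemma A_le : \tr (Q1 *m Q2) <= \tr Q1.
Proof. by rewrite -subr_ge0 L1 frob_ge0. Qed.

Lemma A_eq : \tr (Q1 *m Q2) = \tr Q1 -> Q1 = Q2 *m Q1.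
Proof.
move=> e; have := L1; rewrite e subrr => /esym/frob_eq0.
rewrite mulmxBr mulmx1 => /eqP; rewrite subr_eq0 => /eqP e2.
have : adjmx Q1 = adjmx (Q1 *m Q2) by rewrite -e2.
by rewrite adjmx_mul h1 h2.
Qed.

Lemma B_le : \tr ((Q1 *m Q2) *m (Q1 *m Q2)) <= \tr (Q1 *m Q2).
Proof. by rewrite -subr_ge0 L2 frob_ge0. Qed.

Lemma B_eq : \tr ((Q1 *m Q2) *m (Q1 *m Q2)) = \tr (Q1 *m Q2) <->
  Q1 *m Q2 = Q2 *m Q1.
Proof.
split.
  move=> e; have := L2; rewrite e subrr => /esym/frob_eq0.
  rewrite mulmxBr mulmx1 => /eqP; rewrite subr_eq0 => /eqP e2.
  have e3 : Q2 *m Q1 = Q1 *m Q2 *m Q1.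
    have : adjmx (Q1 *m Q2) = adjmx (Q1 *m Q2 *m Q1) by rewrite -e2.
    by rewrite !adjmx_mul h1 h2 mulmxA.
  by rewrite e3.
move=> c; by rewrite mulmxA -(mulmxA Q1 Q2 Q1) -c mulmxA i1 -mulmxA i2.
Qed.

End Two.
Lemma sum_tens m n (F : 'I_(m * n) -> algC) :
  \sum_z F z = \sum_(i < m) \sum_(j < n) F (mxtens_index (i, j)).
Proof.
rewrite (reindex (@mxtens_index m n)) /=; last first.
  by exists (@mxtens_unindex m n) => x _; rewrite (mxtens_indexK, mxtens_unindexK).
by rewrite pair_big; apply: eq_bigr => -[i j] _.
Qed.

Lemma trace_tens m n (A : 'M[algC]_m) (B : 'M[algC]_n) :
  \tr (A *t B) = \tr A * \tr B.
Proof.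
rewrite /mxtrace sum_tens mulr_suml; apply: eq_bigr => i _.
rewrite mulr_sumr; apply: eq_bigr => j _; by rewrite tensmxE.
Qed.

Lemma idx_eq m n (a c : 'I_m) (b d : 'I_n) :
  (mxtens_index (a, b) == mxtens_index (c, d)) = (a == c) && (b == d).
Proof. by rewrite (can_eq (@mxtens_indexK m n)) xpair_eqE. Qed.

Lemma tens11 m n : (1%:M : 'M[algC]_m) *t (1%:M : 'M[algC]_n) = 1%:M.
Proof.
apply/matrixP => i j.
case: (mxtens_indexP i) => a b; case: (mxtens_indexP j) => c d.
by rewrite tensmxE !mxE idx_eq -natrM mulnb.
Qed.

Lemma tr_cast1 m m' (e : m = m') :
  castmx (e, e) (1%:M : 'M[algC]_m) = 1%:M.
Proof. by case: m' / e; rewrite castmx_id. Qed.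

Lemma sum_deltar m (l : 'I_m) (F : 'I_m -> algC) : \sum_i F i * (i == l)%:R = F l.
Proof.
rewrite (bigD1 l) //= eqxx mulr1 big1 ?addr0 // => i /negbTE ->; by rewrite mulr0.
Qed.

Lemma sum_deltal m (l : 'I_m) (F : 'I_m -> algC) : \sum_i (l == i)%:R * F i = F l.
Proof.
rewrite (bigD1 l) //= eqxx mul1r big1 ?addr0 // => i /negbTE; rewrite eq_sym => ->; by rewrite mul0r.
Qed.

Section Ent.
Variables (n : nat) (P : 'M[algC]_(n * n)).
Definition I2 (a b : 'I_n) : 'I_(n * n) := mxtens_index (a, b).
Definition I3 (a b k : 'I_n) : 'I_(n * n * n) := mxtens_index (I2 a b, k).
Local Notation p a b c d := (P (I2 a b) (I2 c d)).

Lemma Q1E a b k c d l : P1 P (I3 a b k) (I3 c d l) = p a b c d * (k == l)%:R.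
Proof. by rewrite /P1 /I3 tensmxE mxE. Qed.

Lemma Q2E a b k c d l : P2 P (I3 a b k) (I3 c d l) = (a == c)%:R * p b k d l.
Proof.
rewrite /P2 castmxE.
have cE x y z : cast_ord (esym (mulnA n n n)) (I3 x y z) = mxtens_index (x, I2 y z).
  by apply: val_inj => /=; rewrite mulnDl -mulnA addnA.
by rewrite !cE tensmxE mxE.
Qed.

Lemma Eq_of : P1 P = P2 P *m P1 P -> forall a b k c d l,
  \sum_f p b k f l * p a f c d = p a b c d * (k == l)%:R.
Proof.
move=> H a b k c d l.
have := congr1 (fun M : 'M_(n * n * n) => M (I3 a b k) (I3 c d l)) H.
rewrite /= Q1E mxE => ->.
symmetry; rewrite sum_tens sum_tens.
rewrite (eq_bigr (fun a' => (a == a')%:R * \sum_b' p b k b' l * p a' b' c d)); last first.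
  move=> a' _; rewrite mulr_sumr; apply: eq_bigr => b' _.
  rewrite -[X in _ = X](sum_deltar l (fun k' => (a == a')%:R * (p b k b' k' * p a' b' c d))).
  apply: eq_bigr => k' _.
  rewrite -[mxtens_index (_, k')]/(I3 a' b' k') Q1E Q2E.
  by rewrite !mulrA [_ * (k' == l)%:R]mulrC !mulrA.
by rewrite sum_deltal.
Qed.
Lemma PE : P1 P = P2 P *m P1 P -> P = 0 \/ P = 1%:M.
Proof.
move=> H; have E := Eq_of H.
case: (boolP [exists i, exists j, P i j != 0]) => [/existsP [i /existsP [j nz]] | /existsPn all0]; last first.
  left; apply/matrixP => i j; rewrite mxE.
  by have /existsPn/(_ j) := all0 i; rewrite negbK => /eqP.
right; move: nz.
case: (mxtens_indexP i) => a a'; case: (mxtens_indexP j) => c0 d0.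
rewrite -[mxtens_index (a, a')]/(I2 a a') -[mxtens_index (c0, d0)]/(I2 c0 d0).
set q := p a a' c0 d0 => nz.
apply/matrixP => x y; case: (mxtens_indexP x) => b k; case: (mxtens_indexP y) => l m.
rewrite [RHS]mxE idx_eq.
rewrite -[mxtens_index (b, k)]/(I2 b k) -[mxtens_index (l, m)]/(I2 l m).
apply: (mulIf nz).
rewrite -(sum_deltar l (fun f => p b k f m * q)).
transitivity (\sum_f \sum_c' p b k f m * (p a' f c' l * p a c' c0 d0)).
  apply: eq_bigr => f _; rewrite -mulr_sumr E -/q; by rewrite mulrA.
rewrite exchange_big /=.
transitivity (\sum_c' p a c' c0 d0 * (p a' b c' l * (k == m)%:R)).
  apply: eq_bigr => c' _; rewrite -E mulr_sumr; apply: eq_bigr => f _; by ring.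
transitivity ((k == m)%:R * \sum_c' p a' b c' l * p a c' c0 d0).
  rewrite mulr_sumr; apply: eq_bigr => c' _; by ring.
rewrite E -/q -mulnb natrM; by ring.
Qed.
End Ent.

Lemma castmx_mulmx m m' (e : m = m') (A B : 'M[algC]_m) :
  castmx (e, e) A *m castmx (e, e) B = castmx (e, e) (A *m B).
Proof. by case: m' / e; rewrite !castmx_id. Qed.

Theorem lemma1 (n : nat) (P : 'M[algC]_(n * n)) (r : nat) :
  (2 <= n)%N -> orth_proj P -> \rank P = r ->
  (* (a) *)
  (\tr (P1 P *m P2 P) <= (r * n)%:R
   /\ (\tr (P1 P *m P2 P) = (r * n)%:R <->
       P = 0 \/ P = (1%:M : 'M[algC]_n) *t (1%:M : 'M[algC]_n)))
  /\
  (* (b) *)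
  (\tr ((P1 P *m P2 P) ^+ 2) <= \tr (P1 P *m P2 P)
   /\ (\tr ((P1 P *m P2 P) ^+ 2) = \tr (P1 P *m P2 P) <->
       P1 P *m P2 P = P2 P *m P1 P)).
Proof.
move=> n2 [hP iP] rk.
have h1 : adjmx (P1 P) = P1 P by rewrite /P1 adjmx_tens hP adjmx1.
have i1 : P1 P *m P1 P = P1 P by rewrite /P1 tensmx_mul iP mulmx1.
have h2 : adjmx (P2 P) = P2 P by rewrite /P2 adjmx_cast adjmx_tens hP adjmx1.
have i2 : P2 P *m P2 P = P2 P by rewrite /P2 castmx_mulmx tensmx_mul mulmx1 iP.
have trQ1 : \tr (P1 P) = (r * n)%:R by rewrite /P1 trace_tens tr_idem // mxtrace1 rk natrM.
have pw : (P1 P *m P2 P) ^+ 2 = (P1 P *m P2 P) *m (P1 P *m P2 P) by rewrite expr2.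
split; split.
- by rewrite -trQ1; apply: A_le.
- split.
    move=> e; rewrite -trQ1 in e.
    have [->|->] : P = 0 \/ P = 1%:M by apply: PE; apply: A_eq => //.
    - by left.
    - by right; rewrite tens11.
  case=> eP; rewrite eP in rk *.
    by rewrite /P1 tens0mx mul0mx mxtrace0 -rk mxrank0 mul0n.
  move: rk; rewrite tens11 => rk.
  by rewrite /P1 /P2 !tens11 tr_cast1 mulmx1 mxtrace1 -rk mxrank1.
- by rewrite pw; apply: B_le.
- by rewrite pw; apply: B_eq.
Qed.
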